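(* Let $M$ be a graded finitely generated graded multiplication $R$-module and $L$ a graded weakly $J_{gr}$-semiprime ideal of $R$ with $\mathrm{ann}_R(M)\subseteq L$. Then $LM$ is a graded weakly $J_{gr}$-semiprime submodule of $M$.
   Context: Standing conventions: $\Gamma$ is a group, $R=\bigoplus_{g\in\Gamma}R_g$ is a commutative $\Gamma$-graded ring with identity, and $M=\bigoplus_{g\in\Gamma}M_g$ is a unitary $\Gamma$-graded $R$-module. $h(R)$, $h(M)$ are the homogeneous elements. A submodule $U$ is graded if $U=\bigoplus_g(U\cap M_g)$; graded ideals are graded submodules of $R$. $M$ is graded finitely generated if $M=Ra_1+\dots+Ra_n$ with $a_i\in h(M)$; $M$ is a graded multiplication module if every graded submodule equals $KM$ for some graded ideal $K$ of $R$. $\mathrm{ann}_R(M)=\{r\in R: rM=0\}$. A graded submodule $U\neq N$ of a graded module $N$ is Gr-maximal if every graded submodule between $U$ and $N$ equals $U$ or $N$; $J_{gr}(N)$ is the intersection of all Gr-maximal submodules of $N$ ($=N$ if none); $J_{gr}(R)$ is this for $N=R$. A proper graded submodule $U$ of $M$ is graded weakly $J_{gr}$-semiprime if whenever $r_g\in h(R)$, $m_h\in h(M)$, $n\in\mathbb{Z}^+$ and $0\neq r_g^nm_h\in U$, then $r_gm_h\in U+J_{gr}(M)$; a graded ideal of $R$ is graded weakly $J_{gr}$-semiprime if it is so as a submodule of the graded $R$-module $R$. *)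

(* Defs.v *)
From mathcomp Require Import all_boot all_algebra.
From mathcomp Require Import monoid.

Set Implicit Arguments.
Unset Strict Implicit.
Unset Printing Implicit Defensive.

Import GRing.Theory.
Local Open Scope ring_scope.

Section Graded.

Variable G : groupType.
Variable R : comPzRingType.

(* A family (V_g)_{g ∈ G} of additive subgroups of V with V = ⊕_g V_g:
   every element is a finite sum of components from distinct V_g, and
   such sums are independent. *)
Definition is_grading (V : zmodType) (Vg : G -> V -> Prop) : Prop :=
  [/\ (forall g, Vg g 0 /\ forall x y, Vg g x -> Vg g y -> Vg g (x - y)),
      (forall v : V, exists (s : seq G) (x : G -> V),
          [/\ uniq s, (forall g, g \in s -> Vg g (x g)) & v = \sum_(g <- s) x g])
    & (forall (s : seq G) (x : G -> V), uniq s ->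
          (forall g, g \in s -> Vg g (x g)) ->
          \sum_(g <- s) x g = 0 -> forall g, g \in s -> x g = 0)].

Definition graded_ring (Rg : G -> R -> Prop) : Prop :=
  is_grading Rg /\
  forall g h (r s : R), Rg g r -> Rg h s -> Rg (g * h)%g (r * s).

Definition graded_module (V : lmodType R) (Rg : G -> R -> Prop)
    (Vg : G -> V -> Prop) : Prop :=
  is_grading Vg /\
  forall g h (r : R) (m : V), Rg g r -> Vg h m -> Vg (g * h)%g (r *: m).

Definition homogeneous (V : Type) (Vg : G -> V -> Prop) (v : V) : Prop :=
  exists g, Vg g v.

Definition submodule (V : lmodType R) (U : V -> Prop) : Prop :=
  [/\ U 0, (forall x y, U x -> U y -> U (x + y))
    & (forall (r : R) x, U x -> U (r *: x))].

Definition graded_submodule (V : lmodType R) (Vg : G -> V -> Prop)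
    (U : V -> Prop) : Prop :=
  submodule U /\
  forall u, U u -> exists (s : seq G) (x : G -> V),
    [/\ uniq s, (forall g, g \in s -> Vg g (x g) /\ U (x g))
      & u = \sum_(g <- s) x g].

Definition graded_ideal (Rg : G -> R -> Prop) (I : R -> Prop) : Prop :=
  @graded_submodule R^o Rg I.

Definition Gr_maximal (V : lmodType R) (Vg : G -> V -> Prop)
    (U : V -> Prop) : Prop :=
  [/\ graded_submodule Vg U, (exists v, ~ U v)
    & forall W : V -> Prop, graded_submodule Vg W ->
        (forall v, U v -> W v) ->
        (forall v, W v <-> U v) \/ (forall v, W v)].

(* J_gr(V): intersection of all Gr-maximal submodules (= V if none). *)
Definition Jgr (V : lmodType R) (Vg : G -> V -> Prop) (v : V) : Prop :=
  forall U, Gr_maximal Vg U -> U v.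

Definition gr_weakly_Jgr_semiprime (V : lmodType R) (Rg : G -> R -> Prop)
    (Vg : G -> V -> Prop) (U : V -> Prop) : Prop :=
  [/\ graded_submodule Vg U, (exists v, ~ U v)
    & forall (r : R) (m : V) (n : nat),
        homogeneous Rg r -> homogeneous Vg m -> (0 < n)%N ->
        r ^+ n *: m <> 0 -> U (r ^+ n *: m) ->
        exists u j, [/\ U u, Jgr Vg j & r *: m = u + j]].

Definition gr_weakly_Jgr_semiprime_ideal (Rg : G -> R -> Prop)
    (L : R -> Prop) : Prop :=
  @gr_weakly_Jgr_semiprime R^o Rg Rg L.

Definition prod_ideal_mod (V : lmodType R) (K : R -> Prop) (v : V) : Prop :=
  exists s : seq (R * V),
    (forall p, p \in s -> K p.1) /\ v = \sum_(p <- s) p.1 *: p.2.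

Definition gr_finitely_generated (V : lmodType R) (Vg : G -> V -> Prop) : Prop :=
  exists a : seq V, (forall x, x \in a -> homogeneous Vg x) /\
    forall v : V, exists c : 'I_(size a) -> R,
      v = \sum_(i < size a) c i *: a`_i.

Definition gr_multiplication (V : lmodType R) (Rg : G -> R -> Prop)
    (Vg : G -> V -> Prop) : Prop :=
  forall U, graded_submodule Vg U ->
    exists K, graded_ideal Rg K /\ forall v, U v <-> prod_ideal_mod K v.

Definition ann (V : lmodType R) (r : R) : Prop := forall v : V, r *: v = 0.

End Graded.

(* Main.v *)
Require Import Defs.
From mathcomp Require Import all_boot all_algebra.
From mathcomp Require Import monoid perm.
From Stdlib Require Import Classical.
From mathcomp Require Import ring.

Set Implicit Arguments.
Unset Strict Implicit.
Unset Printing Implicit Defensive.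

Import GRing.Theory.
Local Open Scope ring_scope.

Section Aux.
Variable G : groupType.

Section Zmod.
Variable V : zmodType.
Variable Vg : G -> V -> Prop.
Hypothesis HV : is_grading Vg.

Lemma gr0 g : Vg g 0.
Proof. by case: HV => H _ _; case: (H g). Qed.

Lemma grB g x y : Vg g x -> Vg g y -> Vg g (x - y).
Proof. by case: HV => H _ _; case: (H g) => _; apply. Qed.

Lemma grN g x : Vg g x -> Vg g (- x).
Proof. by move=> hx; rewrite -sub0r; apply: grB => //; apply: gr0. Qed.

Lemma grD g x y : Vg g x -> Vg g y -> Vg g (x + y).
Proof. by move=> hx hy; rewrite -[y]opprK; apply: grB => //; apply: grN. Qed.

Lemma grdec v : exists (s : seq G) (x : G -> V),
  [/\ uniq s, (forall g, g \in s -> Vg g (x g)) & v = \sum_(g <- s) x g].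
Proof. by case: HV => _ H _; apply: H. Qed.

Lemma sum_sub_cond (F : G -> V) (s u : seq G) : uniq s -> uniq u ->
  {subset s <= u} ->
  \sum_(g <- u) (if g \in s then F g else 0) = \sum_(g <- s) F g.
Proof.
move=> us uu su; rewrite -big_mkcond /= -big_filter.
apply: perm_big; apply: uniq_perm; first exact: filter_uniq.
  exact: us.
move=> g; rewrite mem_filter; case gs: (g \in s) => //=.
exact: su.
Qed.

Lemma decomp_unique (s t : seq G) (x y : G -> V) : uniq s -> uniq t ->
  (forall g, g \in s -> Vg g (x g)) -> (forall g, g \in t -> Vg g (y g)) ->
  \sum_(g <- s) x g = \sum_(g <- t) y g ->
  forall g, (if g \in s then x g else 0) = (if g \in t then y g else 0).
Proof.
move=> us ut hx hy e g.
set u := undup (s ++ t).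
have uu : uniq u by apply: undup_uniq.
have su : {subset s <= u} by move=> h hh; rewrite mem_undup mem_cat hh.
have tu : {subset t <= u} by move=> h hh; rewrite mem_undup mem_cat hh orbT.
case: HV => _ _ H3.
have hz : forall h, h \in u -> Vg h ((if h \in s then x h else 0) - (if h \in t then y h else 0)).
  move=> h _; apply: grB.
    by case: ifP => hs; [apply: hx | apply: gr0].
  by case: ifP => hs; [apply: hy | apply: gr0].
have hsum : \sum_(h <- u) ((if h \in s then x h else 0) - (if h \in t then y h else 0)) = 0.
  by rewrite sumrB !sum_sub_cond // e subrr.
have := H3 u _ uu hz hsum g.
case gu: (g \in u).
  by move=> /(_ isT) /eqP; rewrite subr_eq0 => /eqP.
move=> _.
have -> : (g \in s) = false by apply/negP => /su; rewrite gu.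
by have -> : (g \in t) = false by apply/negP => /tu; rewrite gu.
Qed.

Lemma regroup (U : V -> Prop) : U 0 -> (forall a b, U a -> U b -> U (a + b)) ->
  forall l : seq (G * V), (forall p, p \in l -> Vg p.1 p.2 /\ U p.2) ->
  exists (s : seq G) (x : G -> V), [/\ uniq s,
    (forall g, g \in s -> Vg g (x g) /\ U (x g)) &
    \sum_(p <- l) p.2 = \sum_(g <- s) x g].
Proof.
move=> U0 UD; elim=> [|p l IH] hl.
  by exists [::], (fun _ => 0); split => //; rewrite !big_nil.
have [|s [x [us hsx e]]] := IH.
  by move=> q ql; apply: hl; rewrite inE ql orbT.
have [hp1 hp2] : Vg p.1 p.2 /\ U p.2 by apply: hl; rewrite inE eqxx.
case ps: (p.1 \in s).
  exists s, (fun g => if g == p.1 then p.2 + x g else x g); split => //.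
    move=> g gs; case: eqP => [->|_]; last exact: hsx.
    have [h1 h2] := hsx _ ps; split; [exact: grD | exact: UD].
  rewrite big_cons e (bigD1_seq p.1 ps us) [RHS](bigD1_seq p.1 ps us) /= eqxx.
  rewrite addrA; congr (_ + _); apply: eq_bigr => g /negPf ->; done.
exists (p.1 :: s), (fun g => if g == p.1 then p.2 else x g); split.
- by rewrite /= ps.
- move=> g; rewrite inE; case: eqP => [->|_] //= gs; exact: hsx.
rewrite big_cons big_cons eqxx e; congr (_ + _).
apply: eq_big_seq => g gs; case: eqP => // eg; by move: gs; rewrite eg ps.
Qed.

Definition hsum (U : V -> Prop) (v : V) :=
  exists l : seq (G * V), (forall p, p \in l -> Vg p.1 p.2 /\ U p.2) /\
    v = \sum_(p <- l) p.2.

Lemma hsum0 U : hsum U 0.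
Proof. by exists [::]; rewrite big_nil. Qed.

Lemma hsumD U a b : hsum U a -> hsum U b -> hsum U (a + b).
Proof.
move=> [l1 [h1 ->]] [l2 [h2 ->]]; exists (l1 ++ l2); split; last by rewrite big_cat.
by move=> p; rewrite mem_cat => /orP [/h1|/h2].
Qed.

Lemma hsum1 U g v : Vg g v -> U v -> hsum U v.
Proof.
move=> h1 h2; exists [:: (g, v)]; split; last by rewrite big_seq1.
by move=> p; rewrite inE => /eqP ->.
Qed.

Lemma hsum_big U (I : eqType) (r : seq I) (F : I -> V) :
  (forall i, i \in r -> hsum U (F i)) -> hsum U (\sum_(i <- r) F i).
Proof.
move=> h; rewrite big_seq; apply: big_ind => //; [exact: hsum0 | exact: hsumD].
Qed.

End Zmod.
End Aux.

Section Ideals.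
Variable R : comPzRingType.
Variable I : R -> Prop.
Hypothesis HI : @submodule R R^o I.

Lemma id0 : I 0. Proof. by case: HI. Qed.
Lemma idD x y : I x -> I y -> I (x + y). Proof. by case: HI => _ h _; apply: h. Qed.
Lemma idMl r x : I x -> I (r * x). Proof. by case: HI => _ _ h; apply: (h r x). Qed.
Lemma idMr r x : I x -> I (x * r). Proof. by rewrite mulrC; apply: idMl. Qed.
Lemma idN x : I x -> I (- x). Proof. by move=> h; rewrite -mulN1r; apply: idMl. Qed.
Lemma idB x y : I x -> I y -> I (x - y). Proof. by move=> h1 h2; apply: idD => //; apply: idN. Qed.
Lemma id_sum (J : Type) (r : seq J) (P : pred J) (F : J -> R) :
  (forall i, P i -> I (F i)) -> I (\sum_(i <- r | P i) F i).
Proof. by move=> h; apply: big_ind => //; [apply: id0 | apply: idD]. Qed.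
Lemma id_all x : I 1 -> I x. Proof. by move=> h; rewrite -[x]mulr1; apply: idMl. Qed.
End Ideals.

Section Mod.
Variables (G : groupType) (R : comPzRingType) (Rg : G -> R -> Prop).
Hypothesis HR : graded_ring Rg.

Lemma HRg : is_grading Rg. Proof. by case: HR. Qed.
Lemma HRmul g h r s : Rg g r -> Rg h s -> Rg (g * h)%g (r * s).
Proof. by case: HR => _; apply. Qed.

Lemma graded_of_hsum (V : lmodType R) (Vg : G -> V -> Prop) (U : V -> Prop) :
  is_grading Vg -> submodule U -> (forall u, U u -> hsum Vg U u) ->
  graded_submodule Vg U.
Proof.
move=> HV hU H; split => // u /H [l [hl ->]].
case: hU => U0 UD _.
exact: (regroup HV U0 UD hl).
Qed.

Lemma genlem (V : lmodType R) (Vg : G -> V -> Prop) (W : R -> Prop) (N : V -> Prop)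
  (y : V) (h : G) :
  graded_module Rg Vg -> graded_ideal Rg W -> Vg h y -> graded_submodule Vg N ->
  graded_submodule Vg (fun v => exists a n, [/\ W a, N n & v = a *: y + n]).
Proof.
move=> [HV HVm] [hW dW] hy [hN dN].
have hU : submodule (fun v => exists a n, [/\ W a, N n & v = a *: y + n]).
  case: hW => W0 WD WS; case: hN => N0 ND NS.
  split.
  - by exists 0, 0; split => //; rewrite scale0r addr0.
  - move=> _ _ [a1 [n1 [h1 h2 ->]]] [a2 [n2 [h3 h4 ->]]].
    exists (a1 + a2), (n1 + n2); split; [exact: WD | exact: ND|].
    by rewrite scalerDl addrACA.
  - move=> r _ [a [n [h1 h2 ->]]]; exists (r * a), (r *: n); split.
    + exact: (WS r a h1).
    + exact: NS.
    by rewrite scalerDr scalerA.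
apply: graded_of_hsum => //.
move=> _ [a [n [ha hn ->]]]; apply: hsumD.
  have [s [x [us hx ->]]] := dW a ha.
  rewrite scaler_suml; apply: hsum_big => g gs.
  have [h1 h2] := hx g gs.
  apply: (@hsum1 _ _ Vg _ (g * h)%g); first exact: HVm.
  by exists (x g), 0; split => //; [case: hN | rewrite addr0].
have [s [x [us hx ->]]] := dN n hn.
apply: hsum_big => g gs; have [h1 h2] := hx g gs.
apply: (@hsum1 _ _ Vg _ g) => //.
by exists 0, (x g); split => //; [case: hW | rewrite scale0r add0r].
Qed.

Lemma True_ideal : graded_ideal Rg (fun _ => True).
Proof.
split; first by split.
move=> u _; have [s [x [us hx e]]] := grdec HRg u.
by exists s, x; split => // g gs; split => //; apply: hx.
Qed.


Lemma one_homog : Rg 1%g 1.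
Proof.
have HV := HRg.
have [s [e [us he e1]]] := grdec HV (1 : R).
have A : forall x h g, Rg h x -> g \in s -> g != 1%g -> x * e g = 0.
  move=> x h g hx gs g1.
  have := @decomp_unique G R Rg HV [:: h] (map (fun g => (h * g)%g) s) (fun _ => x)
     (fun k => x * e (h^-1 * k)%g) isT.
  move=> /(_ _ _ _ _ (h * g)%g).
  rewrite (map_inj_uniq (mulgI h)) us mem_map ?gs; last exact: (mulgI h).
  rewrite mulKg inE.
  have -> : ((h * g)%g == h) = false.
    apply/negP => /eqP hg; move/negP: g1; apply; apply/eqP.
    by apply: (mulgI h); rewrite hg mulg1.
  move=> H; symmetry; apply: H => //.
  - by move=> k; rewrite inE => /eqP ->.
  - move=> k /mapP [g' g's ->]; rewrite mulKg; apply: HRmul => //; exact: he.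
  by rewrite big_seq1 big_map; under eq_bigr do rewrite mulKg; rewrite -mulr_sumr -e1 mulr1.
have B : forall g, g \in s -> g != 1%g -> e g = 0.
  move=> g gs g1; rewrite -[e g]mul1r e1 mulr_suml big_seq big1 // => g' g's.
  exact: (A _ g' _ (he _ g's)).
case s1: (1%g \in s).
  rewrite e1 (bigD1_seq 1%g s1 us) /= big_seq_cond big1 ?addr0; first exact: he.
  by move=> g /andP [gs g1]; apply: B.
rewrite e1 big_seq big1; first exact: gr0.
move=> g gs; apply: B => //; apply/negP => /eqP eg; by rewrite -eg gs in s1.
Qed.

Lemma nil_in_max (P : R -> Prop) (w : R) (h : G) (N : nat) :
  @Gr_maximal G R R^o Rg P -> Rg h w -> w ^+ N = 0 -> P w.
Proof.
move=> [gP [v nv] maxP] hw wN.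
apply: NNPP => Pw.
have gm : graded_module (V:=R^o) Rg Rg by split; [exact: HRg | move=> *; exact: HRmul].
have sub : forall p : R^o, P p -> (fun v : R^o => exists (a : R) (n : R^o), [/\ True, P n & v = a *: (w : R^o) + n]) p.
  by move=> p Pp; exists 0, p; split => //; rewrite scale0r add0r.
have [H|H] := maxP _ (genlem gm True_ideal hw gP) sub.
  apply: Pw; apply/H; exists 1, 0; split => //.
    by case: gP => [[]].
  by rewrite scale1r addr0.
move: H.
move=> /(_ 1) [a [n [_ Pn e]]].
have hP : @submodule R R^o P by case: gP.
apply: nv; apply: (id_all hP).
have -> : 1 = n * \sum_(i < N) (a * w) ^+ i.
  have : (a * w) ^+ N - 1 = (a * w - 1) * \sum_(i < N) (a * w) ^+ i by rewrite subrX1.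
  rewrite exprMn wN mulr0 sub0r => e2.
  have -> : n = 1 - a * w by rewrite e addrC addKr.
  by rewrite -opprB mulNr -e2 opprK.
exact: idMr.
Qed.

Lemma sub_sum (V : lmodType R) (N : V -> Prop) (I : Type) (r : seq I) (P : pred I) (F : I -> V) :
  submodule N -> (forall i, P i -> N (F i)) -> N (\sum_(i <- r | P i) F i).
Proof. by move=> [N0 ND _] h; apply: big_ind. Qed.

Lemma exists_homog_out (V : lmodType R) (Vg : G -> V -> Prop) (N : V -> Prop) :
  is_grading Vg -> submodule N -> (exists v, ~ N v) -> exists g y, Vg g y /\ ~ N y.
Proof.
move=> HV hN [v nv]; apply: NNPP => H; apply: nv.
have [s [c [us hc ->]]] := grdec HV v.
rewrite big_seq; apply: sub_sum => // g gs; apply: NNPP => ncg.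
by apply: H; exists g, (c g); split => //; apply: hc.
Qed.

Lemma Jmod (V : lmodType R) (Vg : G -> V -> Prop) :
  graded_module Rg Vg -> forall j, Jgr (V:=R^o) Rg j -> forall x : V, Jgr Vg (j *: x).
Proof.
move=> HM j hj x N [gN pN maxN].
have [HV HVm] := HM.
have hN : submodule N by case: gN.
have [h [y [hy ny]]] := exists_homog_out HV hN pN.
pose N' := fun v => exists (a : R) (n : V), [/\ True, N n & v = a *: y + n].
have gN' : graded_submodule Vg N' := genlem HM True_ideal hy gN.
have sN' : forall v, N v -> N' v.
  by move=> v nv'; exists 0, v; split => //; rewrite scale0r add0r.
have allN' : forall v, N' v.
  have [H|H] := maxN _ gN' sN' => //.
  exfalso; apply: ny; apply/H; exists 1, 0; split => //; first by case: hN.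
  by rewrite scale1r addr0.
pose P' := fun s : R^o => N (s *: y).
have hP' : @submodule R R^o P'.
  case: hN => N0 ND NS; split.
  - by rewrite /P' scale0r.
  - by move=> a b ha hb; rewrite /P' scalerDl; apply: ND.
  - by move=> r a ha; rewrite /P' /= -scalerA; apply: NS.
have mP' : @Gr_maximal G R R^o Rg P'.
  split.
  - split => // u Pu.
    have [t [c [ut hc eu]]] := grdec HRg u.
    exists t, c; split => // g gt; split; first exact: hc.
    have [t' [n [ut' hn eu']]] := gN.2 _ Pu.
    have := @decomp_unique G V Vg HV (map (fun g => (g * h)%g) t) t'
      (fun k => c (k * h^-1)%g *: y) n.
    rewrite (map_inj_uniq (mulIg h)) ut ut' => /(_ isT isT).
    move=> /(_ _ _ _ ((g * h)%g)).
    have gm : (g * h)%g \in [seq (g0 * h)%g | g0 <- t] by apply: map_f.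
    rewrite gm.
    rewrite mulgK /P' => H.
    have <- : (if (g * h)%g \in t' then n (g * h)%g else 0) = c g *: y.
      symmetry; apply: H.
      + move=> k /mapP [g' g't ->]; rewrite mulgK; apply: HVm => //; exact: hc.
      + by move=> k kt; case: (hn k kt).
      + rewrite -eu' eu scaler_suml big_map; apply: eq_bigr => g' _; by rewrite mulgK.
    by case: ifP => kt; [case: (hn _ kt) | case: hN].
  - by exists 1; rewrite /P' scale1r.
  move=> W gW sW.
  case: (classic (forall v, W v -> P' v)) => [H|H].
    by left => v; split; [apply: H | apply: sW].
  right; have [w Ww] : exists w, ~ (W w -> P' w) by apply: not_all_ex_not.
  have [Ww' nPw] : W w /\ ~ P' w.
    split; first by apply: NNPP => hh; apply: Ww => hh'; contradiction.
    by move=> hh; apply: Ww.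

  pose I := fun v => exists (a : R) (n : V), [/\ W a, N n & v = a *: y + n].
  have gI : graded_submodule Vg I := genlem HM gW hy gN.
  have sI : forall v, N v -> I v.
    by move=> v nv'; exists 0, v; split => //; [case: gW => [[]] | rewrite scale0r add0r].
  have hW : @submodule R R^o W by case: gW.
  have [H2|H2] := maxN _ gI sI.
    exfalso; apply: nPw; apply/H2; exists w, 0; split => //; first by case: hN.
    by rewrite addr0.
  have [a [n [Wa Nn ey]]] := H2 y.
  have P1a : P' (1 - a) by rewrite /P' scalerBl scale1r {1}ey addrAC subrr add0r.
  move=> v; apply: (id_all hW).
  by rewrite -(subrK a 1); apply: idD => //; apply: sW.
have Pj := hj _ mP'.
have [a [n [_ Nn ->]]] := allN' x.
rewrite scalerDr scalerA mulrC -scalerA.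
case: hN => _ ND NS; apply: ND; [exact: NS | exact: NS].
Qed.
End Mod.

Section Det.
Variables (R : comPzRingType) (V : lmodType R) (a : seq V).
Hypothesis hgen : forall v : V, exists c : 'I_(size a) -> R, v = \sum_(i < size a) c i *: a`_i.
Variable L : R -> Prop.
Hypothesis HL : @submodule R R^o L.

Lemma prod_diff (I : Type) (r : seq I) (F H : I -> R) :
  (forall i, L (H i)) -> L (\prod_(i <- r) (F i - H i) - \prod_(i <- r) F i).
Proof.
move=> hH; elim: r => [|i r IH]; first by rewrite !big_nil subrr; apply: (id0 HL).
rewrite !big_cons.
have -> : (F i - H i) * \prod_(j <- r) (F j - H j) - F i * \prod_(j <- r) F j =
  F i * (\prod_(j <- r) (F j - H j) - \prod_(j <- r) F j) - H i * \prod_(j <- r) (F j - H j).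
  by ring.
by apply: (idB HL); [apply: (idMl HL); exact: IH | apply: (idMr HL); exact: hH].
Qed.

Lemma LM_coords (v : V) : prod_ideal_mod L v ->
  exists A : 'I_(size a) -> R, (forall j, L (A j)) /\ v = \sum_j A j *: a`_j.
Proof.
move=> [s [hs ->]]; elim: s hs => [|p s IH] hs.
  exists (fun _ => 0); split; first by move=> _; apply: (id0 HL).
  by rewrite big_nil big1 // => j _; rewrite scale0r.
have [|A [hA eA]] := IH; first by move=> q qs; apply: hs; rewrite inE qs orbT.
have [d ed] := hgen p.2.
have hp : L p.1 by apply: hs; rewrite inE eqxx.
exists (fun j => p.1 * d j + A j); split.
  by move=> j; apply: (idD HL) => //; apply: (idMr HL).
rewrite big_cons eA {1}ed scaler_sumr -big_split; apply: eq_bigr => j _.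
by rewrite scalerDl scalerA.
Qed.

Lemma det_trick c : (forall v : V, prod_ideal_mod L (c *: v)) -> (forall r, ann V r -> L r) ->
  L (c ^+ size a).
Proof.
move=> hc hann.
have hex : forall i : 'I_(size a), exists Ai : 'I_(size a) -> R,
    (forall j, L (Ai j)) /\ c *: a`_i = \sum_j Ai j *: a`_j.
  by move=> i; exact: (LM_coords (hc _)).
have [A hA] := fin_all_exists hex.
pose B := \matrix_(i, j) (c *+ (i == j) - A i j).
have hrow : forall i, \sum_j B i j *: a`_j = 0.
  move=> i; under eq_bigr do rewrite mxE scalerBl.
  rewrite sumrB -(proj2 (hA i)) (bigD1 i) //= eqxx mulr1n big1 ?addr0 ?subrr //.
  by move=> j ji; rewrite eq_sym (negPf ji) mulr0n scale0r.
have hdet : forall k : 'I_(size a), \det B *: a`_k = 0.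
  move=> k.
  have -> : \det B *: a`_k = \sum_j ((\det B)%:M : 'M_(size a)) k j *: a`_j.
    rewrite (bigD1 k) //= mxE eqxx mulr1n big1 ?addr0 //.
    by move=> j jk; rewrite mxE eq_sym (negPf jk) mulr0n scale0r.
  rewrite -mul_adj_mx.
  under eq_bigr do rewrite mxE scaler_suml.
  rewrite exchange_big big1 // => i _.
  under eq_bigr do rewrite -scalerA.
  by rewrite -scaler_sumr hrow scaler0.
have annB : ann V (\det B).
  move=> v; have [d ->] := hgen v; rewrite scaler_sumr big1 // => i _.
  by rewrite scalerA mulrC -scalerA hdet scaler0.
have LB := hann _ annB.
have E : \det B - \det (c%:M : 'M_(size a)) =
   \sum_(s : 'S_(size a)) (-1) ^+ s * (\prod_i (c%:M i (s i) - A i (s i)) - \prod_i (c%:M : 'M_(size a)) i (s i)).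
  rewrite /determinant -sumrB; apply: eq_bigr => s _; rewrite mulrBr; congr (_ * _ - _).
  by apply: eq_bigr => i _; rewrite !mxE.
have LE : L (\det B - \det (c%:M : 'M_(size a))).
  rewrite E; apply: (id_sum HL) => // s _; apply: (idMl HL) => //; apply: prod_diff => // i.
  exact: (proj1 (hA i)).
rewrite -det_scalar.
have -> : \det (c%:M : 'M_(size a)) = \det B - (\det B - \det (c%:M : 'M_(size a))) by rewrite opprB addrC subrK.
by apply: (idB HL).
Qed.
End Det.

Section PIM.
Variables (R : comPzRingType) (V : lmodType R) (K : R -> Prop).
Hypothesis HK : @submodule R R^o K.

Lemma pim0 : prod_ideal_mod (V:=V) K 0.
Proof. by exists [::]; rewrite big_nil. Qed.

Lemma pimD (x y : V) : prod_ideal_mod K x -> prod_ideal_mod K y -> prod_ideal_mod K (x + y).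
Proof.
move=> [s1 [h1 ->]] [s2 [h2 ->]]; exists (s1 ++ s2); split; last by rewrite big_cat.
by move=> p; rewrite mem_cat => /orP [/h1|/h2].
Qed.

Lemma pim1 k (v : V) : K k -> prod_ideal_mod K (k *: v).
Proof.
move=> hk; exists [:: (k, v)]; split; last by rewrite big_seq1.
by move=> p; rewrite inE => /eqP ->.
Qed.

Lemma pimZ r (x : V) : prod_ideal_mod K x -> prod_ideal_mod K (r *: x).
Proof.
move=> [s [hs ->]]; rewrite scaler_sumr big_seq; apply: big_ind.
- exact: pim0.
- exact: pimD.
move=> p ps; rewrite scalerA; apply: pim1; exact: (idMl HK _ (hs p ps)).
Qed.

Lemma pim_sub : submodule (prod_ideal_mod (V:=V) K).
Proof. split; [exact: pim0 | exact: pimD | exact: pimZ]. Qed.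
End PIM.

Lemma Jgr_sub (G : groupType) (R : comPzRingType) (V : lmodType R) (Vg : G -> V -> Prop) :
  submodule (Jgr Vg).
Proof.
split.
- by move=> N [[[]]].
- by move=> x y hx hy N hN; case: (hN) => [[[_ ND _] _] _ _]; apply: ND; [apply: hx | apply: hy].
- by move=> r x hx N hN; case: (hN) => [[[_ _ NS] _] _ _]; apply: NS; apply: hx.
Qed.

Theorem theorem2p17 (G : groupType) (R : comPzRingType) (M : lmodType R)
    (Rg : G -> R -> Prop) (Mg : G -> M -> Prop) (L : R -> Prop) :
  graded_ring Rg ->
  graded_module Rg Mg ->
  gr_finitely_generated Mg ->
  gr_multiplication Rg Mg ->
  gr_weakly_Jgr_semiprime_ideal Rg L ->
  (forall r : R, ann M r -> L r) ->
  gr_weakly_Jgr_semiprime Rg Mg (prod_ideal_mod (V:=M) L).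
Proof.
move=> HR HM [a [ha hgen]] Hmul [gL [v0 nv0] wL] hann.
have hL : @submodule R R^o L by case: gL.
have [HV HVm] := HM.
have hLM := pim_sub M hL.
split.
- apply: graded_of_hsum => // _ [s [hs ->]].
  apply: hsum_big => p ps.
  have [t [x [ut hx ->]]] := gL.2 _ (hs p ps).
  have [t' [y [ut' hy ->]]] := grdec HV p.2.
  rewrite scaler_suml; apply: hsum_big => g gt; rewrite scaler_sumr; apply: hsum_big => h ht.
  have [h1 h2] := hx g gt.
  apply: (@hsum1 _ _ Mg _ (g * h)%g); first by apply: HVm => //; apply: hy.
  exact: pim1.
- apply: NNPP => H.
  have hall : forall v : M, prod_ideal_mod L (1 *: v).
    by move=> v; apply: NNPP => h; apply: H; exists (1 *: v).
  have := det_trick hgen hL hall hann; rewrite expr1n => L1.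
  by apply: nv0; apply: (id_all hL).
move=> r m n [g hr] [h hm] n0 nz LMrm.
pose Rm := fun v : M => exists (b : R) (z : M), [/\ True, z = 0 & v = b *: m + z].
have g0 : graded_submodule Mg (fun z : M => z = 0).
  split; first by split => // [x y -> ->|r' x ->]; rewrite ?addr0 ?scaler0.
  by move=> u ->; exists [::], (fun _ => 0); split => //; rewrite big_nil.
have gRm : graded_submodule Mg Rm := genlem HM (True_ideal HR) hm g0.
have [K [gK eK]] := Hmul _ gRm.
have hK : @submodule R R^o K by case: gK.
have E : forall k g', K k -> Rg g' k ->
    exists u j, [/\ L u, Jgr (V:=R^o) Rg j & r * k = u + j].
  move=> k g' Kk hk.
  have hc : forall v : M, prod_ideal_mod L ((r ^+ n * k) *: v).
    move=> v; have [b [z [_ -> e]]] := (eK (k *: v)).2 (pim1 _ Kk).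
    rewrite -scalerA e addr0 scalerA mulrC -scalerA; exact: pimZ.
  have Lc := det_trick hgen hL hc hann.
  set t := size a in Lc.
  have t0 : (0 < t)%N.
    rewrite lt0n; apply/negP => /eqP t0; apply: nv0; apply: (id_all hL).
    by move: Lc; rewrite t0 expr0.
  have Lw : L ((r * k) ^+ (n * t)).
    have -> : (r * k) ^+ (n * t) = (r ^+ n * k) ^+ t * k ^+ (n * t - t).
      rewrite !exprMn -exprM -mulrA -exprD subnKC //.
      by rewrite leq_pmull.
    exact: (idMr hL).
  have hw : Rg (g * g')%g (r * k) by apply: HRmul.
  case: (eqVneq ((r * k) ^+ (n * t)) 0) => [w0|w0].
    exists 0, (r * k); split; [exact: (id0 hL) | | by rewrite add0r].
    by move=> P hP; apply: (nil_in_max HR hP hw w0).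
  have := wL (r * k) 1 (n * t) (ex_intro _ _ hw) (ex_intro _ _ (one_homog HR)).
  rewrite muln_gt0 n0 t0 /= => /(_ isT).
  have e1 : forall x : R, x *: (1 : R^o) = x by move=> x; exact: mulr1.
  have w0' : (r * k) ^+ (n * t) <> 0 by apply/eqP.
  rewrite !e1 => /(_ w0' Lw) [u [j [Lu Jj ew]]].
  by exists u, j; split.
have [s [hs em]] : prod_ideal_mod K m by apply/eK; exists 1, 0; split => //; rewrite scale1r addr0.
pose S := fun v : M => exists u j, [/\ prod_ideal_mod L u, Jgr Mg j & v = u + j].
have S0 : S 0 by exists 0, 0; split; [exact: pim0 | case: (Jgr_sub Mg) | rewrite addr0].
have SD : forall x y, S x -> S y -> S (x + y).
  move=> _ _ [u1 [j1 [h1 h2 ->]]] [u2 [j2 [h3 h4 ->]]].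
  exists (u1 + u2), (j1 + j2); split; [exact: pimD | case: (Jgr_sub Mg) => _ D _; exact: D | ].
  by rewrite addrACA.
rewrite em scaler_sumr big_seq; apply: (big_ind S) => // p ps.
have [t [x [ut hx ->]]] := gK.2 _ (hs p ps).
rewrite scaler_suml scaler_sumr big_seq; apply: (big_ind S) => // g' g't.
have [h1 h2] := hx g' g't.
have [u [j [Lu Jj ew]]] := E _ _ h2 h1.
exists (u *: p.2), (j *: p.2); split.
- exact: pim1.
- exact: (Jmod HR HM Jj).
by rewrite scalerA ew scalerDl.
Qed.
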